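(* Let $M\in\mathcal{D}_2$. Then the set $E_M\coloneqq\{z\in M:\ \operatorname{card}(\operatorname{Tan}(M,z)\cap S^1)=1\}$ is discrete.
   Context: A function on an open convex set $C\subset\mathbb{R}^d$ is DC if it is the difference of two convex functions on $C$. $\mathcal{D}_2$ denotes the family consisting of $\varnothing$ together with all nonempty closed sets $A\subset\mathbb{R}^2$ whose distance function $d_A=\operatorname{dist}(\cdot,A)$ is DC on $\mathbb{R}^2$. $S^1$ is the unit circle in $\mathbb{R}^2$. The tangent cone $\operatorname{Tan}(A,a)$ consists of all $u$ such that $u=\lim_{i\to\infty}r_i(a_i-a)$ for some $r_i>0$ and $a_i\in A$ with $a_i\to a$. A set $D\subset\mathbb{R}^2$ is discrete if each point of $\mathbb{R}^2$ has a neighbourhood containing at most one point of $D$. *)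

(* Defs.v *)
(* points of R^2 are pairs (R * R) over R : realType,
   with the Euclidean norm defined explicitly (MathComp's product norm is the max norm,
   but it induces the same topology, which is all we use from it). *)
From HB Require Import structures.
From mathcomp Require Import all_boot all_order all_algebra.
From mathcomp Require Import all_classical all_reals all_analysis.
Set Implicit Arguments. Unset Strict Implicit. Unset Printing Implicit Defensive.
Import Order.TTheory GRing.Theory Num.Theory.
Import numFieldNormedType.Exports.
Local Open Scope classical_set_scope.
Local Open Scope ring_scope.

Section Defs.
Variable R : realType.
Definition pt := (R * R)%type.

Definition enorm (p : pt) : R := Num.sqrt (p.1 ^+ 2 + p.2 ^+ 2).

Definition distA (A : set pt) (x : pt) : R :=
  inf [set enorm (x.1 - a.1, x.2 - a.2) | a in A].

Definition convex_fun (f : pt -> R) : Prop :=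
  forall (x y : pt) (t : R), 0 <= t -> t <= 1 ->
    f (t * x.1 + (1 - t) * y.1, t * x.2 + (1 - t) * y.2)
      <= t * f x + (1 - t) * f y.

Definition DC (f : pt -> R) : Prop :=
  exists g h : pt -> R, convex_fun g /\ convex_fun h /\ forall x, f x = g x - h x.

Definition D2 (A : set pt) : Prop :=
  A = set0 \/ (A !=set0 /\ closed A /\ DC (distA A)).

Definition Tan (A : set pt) (a : pt) : set pt :=
  [set u | exists (r : nat -> R) (s : nat -> pt),
      (forall i, 0 < r i) /\ (forall i, A (s i)) /\
      s @ \oo --> a /\
      (fun i => (r i * ((s i).1 - a.1), r i * ((s i).2 - a.2))) @ \oo --> u].

Definition S1 : set pt := [set u | u.1 ^+ 2 + u.2 ^+ 2 = 1].

Definition discrete_set (D : set pt) : Prop :=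
  forall p : pt, exists U, nbhs p U /\
    forall x y, U x -> U y -> D x -> D y -> x = y.

Definition E_set (M : set pt) : set pt :=
  [set z | M z /\ exists u : pt, Tan M z `&` S1 = [set u]].
End Defs.

(* Main.v *)
Require Import Defs.
From HB Require Import structures.
From mathcomp Require Import all_boot all_order all_algebra.
From mathcomp Require Import all_classical all_reals all_analysis.
From mathcomp Require Import ring lra.
Set Implicit Arguments. Unset Strict Implicit. Unset Printing Implicit Defensive.
Import Order.TTheory GRing.Theory Num.Theory.
Import numFieldNormedType.Exports.
Local Open Scope classical_set_scope.
Local Open Scope ring_scope.
Section Aux.
Variable R : realType.
Local Notation pt := (pt R).

Lemma bfun (u : nat -> R) (B : R) : (forall n, `|u n| <= B) -> bounded_fun u.
Proof.
move=> H; rewrite /bounded_fun /bounded_near.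
near=> M. move=> n _; apply: le_trans (H n) _.
by near: M; apply: nbhs_pinfty_ge; rewrite num_real.
Unshelve. all: end_near. Qed.

Lemma incr_ge (f : nat -> nat) : increasing_seq f -> forall n, (n <= f n)%N.
Proof.
move=> /increasing_seqP Hf; elim=> [|n IH] //.
by apply: leq_ltn_trans IH (Hf n).
Qed.

Lemma subseq_cvg (T : topologicalType) (u : nat -> T) (l : T) (f : nat -> nat) :
  increasing_seq f -> u @ \oo --> l -> (u \o f) @ \oo --> l.
Proof.
move=> Hf Hu; apply: cvg_comp Hu.
move=> P [N _ HN]; exists N => // n /= Nn; apply: HN.
exact: leq_trans Nn (incr_ge Hf n).
Qed.

Lemma pair_cvg (u v : nat -> R) (a b : R) :
  u @ \oo --> a -> v @ \oo --> b -> (fun n => (u n, v n)) @ \oo --> (a, b).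
Proof. move=> Hu Hv. exact: (cvg_pair Hu Hv). Qed.

Lemma near_oo (P : nat -> Prop) : (\forall n \near \oo, P n) -> exists N, forall n, (N <= n)%N -> P n.
Proof. move=> [N _ HN]; exists N => n Nn. by apply: HN. Qed.

Definition dot (a b : pt) := a.1 * b.1 + a.2 * b.2.
Definition nsq (a : pt) := a.1 ^+ 2 + a.2 ^+ 2.

Lemma enorm_ge0 (p : pt) : 0 <= enorm p.
Proof. exact: sqrtr_ge0. Qed.

Lemma dist_ge0 (M : set pt) x : M !=set0 -> 0 <= distA M x.
Proof.
move=> [m Mm]; apply: lb_le_inf; first by exists (enorm (x.1 - m.1, x.2 - m.2)), m.
by move=> _ [a _ <-]; exact: enorm_ge0.
Qed.

Lemma dist_le (M : set pt) x m : M m -> distA M x <= enorm (x.1 - m.1, x.2 - m.2).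
Proof.
move=> Mm; apply: ge_inf; last by exists m.
by exists 0 => _ [a _ <-]; exact: enorm_ge0.
Qed.

Lemma dist_lt (M : set pt) x c : M !=set0 -> distA M x < c ->
  exists m, M m /\ enorm (x.1 - m.1, x.2 - m.2) < c.
Proof.
move=> [m0 Mm0] /inf_lt [].
  by exists (enorm (x.1 - m0.1, x.2 - m0.2)), m0.
by move=> _ [m Mm <-] H; exists m.
Qed.

Lemma dist0 (M : set pt) z : M z -> distA M z = 0.
Proof.
move=> Mz; apply/eqP; rewrite eq_le dist_ge0; last by exists z.
by rewrite andbT; apply: le_trans (dist_le _ Mz) _; rewrite /enorm !subrr /= expr0n /= addr0 sqrtr0.
Qed.

Lemma enorm_lt_sq (p : pt) c : enorm p < c -> nsq p < c ^+ 2.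
Proof.
rewrite /enorm /nsq => H.
have h0 := sqrtr_ge0 (p.1 ^+ 2 + p.2 ^+ 2).
have h1 : p.1 ^+ 2 + p.2 ^+ 2 = (Num.sqrt (p.1 ^+ 2 + p.2 ^+ 2)) ^+ 2.
  by rewrite sqr_sqrtr // addr_ge0 // sqr_ge0.
rewrite h1; nra.
Qed.

Lemma sq_lt_norm (x c : R) : 0 < c -> x ^+ 2 < c ^+ 2 -> `|x| < c.
Proof.
move=> c0 h; have h1 : `|x| ^+ 2 = x ^+ 2 by rewrite real_normK // num_real.
have h2 := normr_ge0 x. nra.
Qed.

Lemma cs_ineq (q a : pt) : (dot q a) ^+ 2 <= nsq q * nsq a.
Proof.
rewrite /dot /nsq; have h := sqr_ge0 (q.1 * a.2 - q.2 * a.1); nra.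
Qed.

Lemma comp_incr (f g : nat -> nat) : increasing_seq f -> increasing_seq g ->
  increasing_seq (f \o g).
Proof. by move=> Hf Hg a b /=; rewrite Hf; exact: Hg. Qed.

Lemma pair_cvg' (s : nat -> pt) (a : pt) :
  (fun n => (s n).1) @ \oo --> a.1 -> (fun n => (s n).2) @ \oo --> a.2 -> s @ \oo --> a.
Proof.
move=> h1 h2; have := pair_cvg h1 h2.
have -> : (fun n => ((s n).1, (s n).2)) = s by apply/funext => n; case: (s n).
by rewrite -surjective_pairing.
Qed.

Lemma fin_arith (q1 q2 w1 w2 l1 l2 ep : R) : 0 < ep ->
   (q1 * (w1 - l1) + q2 * (w2 - l2)) ^+ 2 <= (q1 ^+ 2 + q2 ^+ 2) * ((w1 - l1) ^+ 2 + (w2 - l2) ^+ 2) ->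
   q1 ^+ 2 + q2 ^+ 2 <= 1 ->
   (w1 - l1) ^+ 2 + (w2 - l2) ^+ 2 <= (q1 * w1 + q2 * w2 - ep) ^+ 2 ->
   0 < q1 * w1 + q2 * w2 - ep -> q1 * l1 + q2 * l2 <= 0 -> False.
Proof.
  move=> h0 h1 h2 h3 h4 h5.
  have h6 : q1 * w1 + q2 * w2 - ep < q1 * (w1 - l1) + q2 * (w2 - l2) by lra.
  have h7 : (q1 * w1 + q2 * w2 - ep) ^+ 2 < (q1 * (w1 - l1) + q2 * (w2 - l2)) ^+ 2.
    by nra.
  have h8 : (q1 ^+ 2 + q2 ^+ 2) * ((w1 - l1) ^+ 2 + (w2 - l2) ^+ 2) <= (w1 - l1) ^+ 2 + (w2 - l2) ^+ 2.
    by rewrite ler_piMl // addr_ge0 // sqr_ge0.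
  lra.
Qed.

Lemma tan_lower (M : set pt) (z u q w : pt) (eps : R) :
  M !=set0 -> M z -> Tan M z `&` (@S1 R) = [set u] -> nsq q <= 1 -> dot q u <= 0 -> 0 < eps ->
  exists t, 0 < t /\ t <= 1 /\
    t * (dot q w - eps) <= distA M (z.1 + t * w.1, z.2 + t * w.2).
Proof.
move=> M0 Mz TU hq1 qu e0.
apply: contrapT => Hn.
have H : forall k : nat, exists m, M m /\
    enorm ((z.1 + k.+1%:R^-1 * w.1) - m.1, (z.2 + k.+1%:R^-1 * w.2) - m.2)
      < k.+1%:R^-1 * (dot q w - eps).
  move=> k; apply: (dist_lt (x := (z.1 + k.+1%:R^-1 * w.1, z.2 + k.+1%:R^-1 * w.2))) => //.
  rewrite ltNge; apply/negP => Hle; apply: Hn; exists k.+1%:R^-1; split; last split => //.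
  - by rewrite invr_gt0 ltr0n.
  - by rewrite invf_le1 ?ler1n ?ltr0n.
have [m Hm] := choice H.
set c := dot q w - eps.
have c0 : 0 < c.
  have [_ /(le_lt_trans (enorm_ge0 _))] := Hm 0%N.
  by rewrite pmulr_rgt0 // invr_gt0 ltr0n.
pose v k : pt := (k.+1%:R * ((m k).1 - z.1), k.+1%:R * ((m k).2 - z.2)).
have Hv : forall k, (w.1 - (v k).1) ^+ 2 + (w.2 - (v k).2) ^+ 2 < c ^+ 2.
  move=> k; have [_ /enorm_lt_sq] := Hm k.
  rewrite /nsq /= => Hk.
  move: Hk; set N := k.+1%:R : R => Hk.
  have N0 : N != 0 by rewrite pnatr_eq0.
  have N1 : 0 < N by rewrite ltr0n.
  have -> : w.1 - N * ((m k).1 - z.1) = N * (z.1 + N^-1 * w.1 - (m k).1).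
    by field.
  have -> : w.2 - N * ((m k).2 - z.2) = N * (z.2 + N^-1 * w.2 - (m k).2).
    by field.
  have -> : c ^+ 2 = N ^+ 2 * (N^-1 * c) ^+ 2.
    by rewrite exprMn mulrA -exprMn mulfV // expr1n mul1r.
  rewrite !exprMn -mulrDr ltr_pM2l ?exprn_gt0 // -exprMn; exact: Hk.
have Hvi : forall k, `|w.1 - (v k).1| < c /\ `|w.2 - (v k).2| < c.
  move=> k; have h := Hv k.
  split; apply: sq_lt_norm => //.
  - by have := sqr_ge0 (w.2 - (v k).2); lra.
  - by have := sqr_ge0 (w.1 - (v k).1); lra.
have Bv : forall k, `|(v k).1| <= `|w.1| + c /\ `|(v k).2| <= `|w.2| + c.
  move=> k; have [h1 h2] := Hvi k; split.
  - have -> : (v k).1 = w.1 - (w.1 - (v k).1) by ring.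
    by apply: le_trans (ler_normB _ _) _; rewrite lerD2l ltW.
  - have -> : (v k).2 = w.2 - (w.2 - (v k).2) by ring.
    by apply: le_trans (ler_normB _ _) _; rewrite lerD2l ltW.
have B1 : bounded_fun (fun k => (v k).1).
  by apply: (@bfun _ (`|w.1| + c)) => k; case: (Bv k).
have [f1 f1i f1c] := bolzano_weierstrass B1.
have B2 : bounded_fun (fun k => (v (f1 k)).2).
  by apply: (@bfun _ (`|w.2| + c)) => k; case: (Bv (f1 k)).
have [f2 f2i f2c] := bolzano_weierstrass B2.
pose sg := f1 \o f2.
have sgi : increasing_seq sg by exact: comp_incr.
set L1 := limn ((fun k => (v k).1) \o f1).
set L2 := limn ((fun k => (v (f1 k)).2) \o f2).
have C1 : (fun k => (v (sg k)).1) @ \oo --> L1.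
  exact: (subseq_cvg f2i f1c).
have C2 : (fun k => (v (sg k)).2) @ \oo --> L2 by exact: f2c.
have Msg : forall i, (m (sg i)).1 = z.1 + harmonic (sg i) * (v (sg i)).1 /\
                      (m (sg i)).2 = z.2 + harmonic (sg i) * (v (sg i)).2.
  move=> i; rewrite /harmonic /v /=.
  have N0 : (sg i).+1%:R != 0 :> R by rewrite pnatr_eq0.
  by split; field.
have Hs : (fun i => m (sg i)) @ \oo --> z.
  have Hh := subseq_cvg sgi (@cvg_harmonic R).
  apply: pair_cvg'.
  - have -> : (fun n => (m (sg n)).1) = (fun n => z.1 + harmonic (sg n) * (v (sg n)).1).
      by apply/funext => n; case: (Msg n).
    have := cvgD (cvg_cst z.1) (cvgM Hh C1); rewrite mul0r addr0; exact.
  - have -> : (fun n => (m (sg n)).2) = (fun n => z.2 + harmonic (sg n) * (v (sg n)).2).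
      by apply/funext => n; case: (Msg n).
    have := cvgD (cvg_cst z.2) (cvgM Hh C2); rewrite mul0r addr0; exact.
have TanL : Tan M z (L1, L2).
  exists (fun i => (sg i).+1%:R), (fun i => m (sg i)); split; [|split; [|split]].
  - by move=> i; rewrite ltr0n.
  - by move=> i; case: (Hm (sg i)).
  - exact: Hs.
  - exact: (pair_cvg C1 C2).
have Lle : (w.1 - L1) ^+ 2 + (w.2 - L2) ^+ 2 <= c ^+ 2.
  apply: (ler_cvg_to (a := \oo) (f := fun k => (w.1 - (v (sg k)).1) ^+ 2 + (w.2 - (v (sg k)).2) ^+ 2)
                     (g := fun=> c ^+ 2)).
    rewrite !expr2.
    apply: cvgD; apply: cvgM; apply: cvgB; (exact: cvg_cst || assumption).
  - exact: cvg_cst.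
  - by apply: nearW => k; exact: ltW (Hv _).
have qL : q.1 * L1 + q.2 * L2 <= 0.
  have cs := cs_ineq q (L1, L2); rewrite /dot /nsq /= in cs.
  have [S0|S0] := eqVneq (L1 ^+ 2 + L2 ^+ 2) 0.
    rewrite S0 mulr0 in cs.
    by nra.
  have Sp : 0 < L1 ^+ 2 + L2 ^+ 2.
    by rewrite lt_def S0 /= addr_ge0 // sqr_ge0.
  set n := Num.sqrt (L1 ^+ 2 + L2 ^+ 2).
  have n0 : 0 < n by rewrite sqrtr_gt0.
  have nn : n ^+ 2 = L1 ^+ 2 + L2 ^+ 2 by rewrite sqr_sqrtr // ltW.
  have nz : n != 0 by rewrite gt_eqF.
  have Tn : (Tan M z `&` (@S1 R)) (L1 / n, L2 / n).
    split.
    - exists (fun i => (sg i).+1%:R / n), (fun i => m (sg i)); split; [|split; [|split]].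
      + by move=> i; rewrite divr_gt0 // ltr0n.
      + by move=> i; case: (Hm (sg i)).
      + exact: Hs.
      + apply: pair_cvg.
        * have -> : (fun i => (sg i).+1%:R / n * ((m (sg i)).1 - z.1)) =
                    (fun i => (v (sg i)).1 * n^-1) by apply/funext => i; rewrite /v /=; ring.
          exact: (cvgM C1 (cvg_cst _)).
        * have -> : (fun i => (sg i).+1%:R / n * ((m (sg i)).2 - z.2)) =
                    (fun i => (v (sg i)).2 * n^-1) by apply/funext => i; rewrite /v /=; ring.
          exact: (cvgM C2 (cvg_cst _)).
    - rewrite /S1 /= !expr_div_n -mulrDl -nn mulfV //.
      by rewrite expf_neq0.
  rewrite TU in Tn; have Tu : (L1 / n, L2 / n) = u := Tn; rewrite -Tu /= in qu.
  have e1 : L1 = n * (L1 / n) by field.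
  have e2 : L2 = n * (L2 / n) by field.
  rewrite e1 e2; move: qu; set a := L1 / n; set b := L2 / n; rewrite /dot /=.
  by nra.
have cs := cs_ineq q (w.1 - L1, w.2 - L2); rewrite /dot /nsq /= in cs.
rewrite /c /dot in Lle c0.
rewrite /nsq in hq1. have := fin_arith e0 cs hq1. move=> /(_ Lle). by apply.
Qed.

Lemma sep_sup (A B : set R) : A !=set0 -> B !=set0 ->
  (forall a b, A a -> B b -> a <= b) ->
  exists m, (forall a, A a -> a <= m) /\ (forall b, B b -> m <= b).
Proof.
move=> [a0 Aa0] [b0 Bb0] AB; exists (sup A); split.
- move=> a Aa; apply: ub_le_sup => //; exists b0 => x Ax; exact: AB.
- move=> b Bb; apply: ge_sup; first by exists a0.
  by move=> x Ax; exact: AB.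
Qed.

Lemma quot_sep (s r A B : R) : s < 0 -> 0 < r ->
  0 <= r / (r - s) * A + (1 - r / (r - s)) * B -> A / s <= B / r.
Proof.
move=> s0 r0 H.
have d0 : 0 < r - s by lra.
have dn : r - s != 0 by rewrite gt_eqF.
have e : (r - s) * (r / (r - s) * A + (1 - r / (r - s)) * B) = r * A - s * B.
  by field.
have h1 : 0 <= r * A - s * B by rewrite -e mulr_ge0 // ltW.
have sn : s != 0 by rewrite lt_eqF.
have rn : r != 0 by rewrite gt_eqF.
have eA : A = s * (A / s) by field.
have eB : B = r * (B / r) by field.
move: h1; rewrite {1}eA {1}eB; set p := A / s; set p' := B / r => h1.
have rs : r * s < 0 by rewrite pmulr_rlt0.
nra.
Qed.

Lemma comb_in (s r : R) : s < 0 -> 0 < r -> 0 <= r / (r - s) /\ r / (r - s) <= 1.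
Proof.
move=> s0 r0; have d0 : 0 < r - s by lra.
split; first by rewrite divr_ge0 // ltW.
by rewrite ler_pdivrMr // mul1r; lra.
Qed.

Lemma subgrad (h : pt -> R) : convex_fun h -> forall z : pt,
  exists c : pt, forall w : pt, dot c w <= h (z.1 + w.1, z.2 + w.2) - h z.
Proof.
move=> hc z.
pose Hf x y := h (z.1 + x, z.2 + y) - h z.
have convH : forall t x1 y1 x2 y2, 0 <= t -> t <= 1 ->
    Hf (t * x1 + (1 - t) * x2) (t * y1 + (1 - t) * y2) <= t * Hf x1 y1 + (1 - t) * Hf x2 y2.
  move=> t x1 y1 x2 y2 t0 t1; rewrite /Hf.
  have := hc (z.1 + x1, z.2 + y1) (z.1 + x2, z.2 + y2) t t0 t1; rewrite /=.
  have -> : t * (z.1 + x1) + (1 - t) * (z.1 + x2) = z.1 + (t * x1 + (1 - t) * x2) by ring.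
  have -> : t * (z.2 + y1) + (1 - t) * (z.2 + y2) = z.2 + (t * y1 + (1 - t) * y2) by ring.
  move=> H; lra.
have H00 : Hf 0 0 = 0 by rewrite /Hf !addr0 -surjective_pairing subrr.
have [a [Ha1 Ha2]] : exists a, (forall v, (exists s, s < 0 /\ v = Hf s 0 / s) -> v <= a) /\
                         (forall v, (exists r, 0 < r /\ v = Hf r 0 / r) -> a <= v).
  apply: sep_sup.
  - by exists (Hf (-1) 0 / (-1)), (-1); split => //; rewrite ltrN10.
  - by exists (Hf 1 0 / 1), 1.
  move=> _ _ [s [s0 ->]] [r [r0 ->]].
  apply: quot_sep => //.
  have [t0 t1] := comb_in s0 r0.
  have := convH (r / (r - s)) s 0 r 0 t0 t1.
  have d0 : r - s != 0 by rewrite gt_eqF //; lra.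
  have -> : r / (r - s) * s + (1 - r / (r - s)) * r = 0 by field.
  by rewrite !mulr0 addr0 H00.
have Ha : forall x, a * x <= Hf x 0.
  move=> x; have [x0|x0|->] := ltgtP x 0.
  - have := Ha1 (Hf x 0 / x) (ex_intro _ x (conj x0 erefl)).
    have xn : x != 0 by rewrite lt_eqF.
    have e : Hf x 0 = x * (Hf x 0 / x) by field.
    rewrite {2}e; set p := Hf x 0 / x => hp; nra.
  - have := Ha2 (Hf x 0 / x) (ex_intro _ x (conj x0 erefl)).
    have xn : x != 0 by rewrite gt_eqF.
    have e : Hf x 0 = x * (Hf x 0 / x) by field.
    rewrite {2}e; set p := Hf x 0 / x => hp; nra.
  - by rewrite mulr0 H00.
have [b [Hb1 Hb2]] : exists b,
    (forall v, (exists x y, y < 0 /\ v = (Hf x y - a * x) / y) -> v <= b) /\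
    (forall v, (exists x y, 0 < y /\ v = (Hf x y - a * x) / y) -> b <= v).
  apply: sep_sup.
  - by exists ((Hf 0 (-1) - a * 0) / (-1)), 0, (-1); split => //; rewrite ltrN10.
  - by exists ((Hf 0 1 - a * 0) / 1), 0, 1.
  move=> _ _ [x1 [y1 [y10 ->]]] [x2 [y2 [y20 ->]]].
  apply: quot_sep => //.
  have [t0 t1] := comb_in y10 y20.
  have := convH (y2 / (y2 - y1)) x1 y1 x2 y2 t0 t1.
  have d0 : y2 - y1 != 0 by rewrite gt_eqF //; lra.
  have -> : y2 / (y2 - y1) * y1 + (1 - y2 / (y2 - y1)) * y2 = 0 by field.
  have := Ha (y2 / (y2 - y1) * x1 + (1 - y2 / (y2 - y1)) * x2).
  set l := y2 / (y2 - y1); set X := Hf _ 0 => hX hc2.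
  have -> : l * (Hf x1 y1 - a * x1) + (1 - l) * (Hf x2 y2 - a * x2) =
            (l * Hf x1 y1 + (1 - l) * Hf x2 y2) - a * (l * x1 + (1 - l) * x2) by ring.
  by rewrite subr_ge0; apply: le_trans hX hc2.
exists (a, b) => -[x y]; rewrite /dot /=.
have [y0|y0|->] := ltgtP y 0.
- have := Hb1 ((Hf x y - a * x) / y) (ex_intro _ x (ex_intro _ y (conj y0 erefl))).
  have yn : y != 0 by rewrite lt_eqF.
  have e : Hf x y - a * x = y * ((Hf x y - a * x) / y) by field.
  set p := (Hf x y - a * x) / y => hp.
  have : Hf x y = a * x + y * p by rewrite -e; ring.
  rewrite /Hf => ->; nra.
- have := Hb2 ((Hf x y - a * x) / y) (ex_intro _ x (ex_intro _ y (conj y0 erefl))).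
  have yn : y != 0 by rewrite gt_eqF.
  have e : Hf x y - a * x = y * ((Hf x y - a * x) / y) by field.
  set p := (Hf x y - a * x) / y => hp.
  have : Hf x y = a * x + y * p by rewrite -e; ring.
  rewrite /Hf => ->; nra.
- by rewrite mulr0 addr0; exact: Ha.
Qed.


Lemma conv_comb (h : pt -> R) : convex_fun h -> forall (a b : pt) t U, 0 <= t -> t <= 1 ->
  h a <= U -> h b <= U -> h (t * a.1 + (1 - t) * b.1, t * a.2 + (1 - t) * b.2) <= U.
Proof.
move=> hc a b t U t0 t1 ha hb; apply: le_trans (hc a b t t0 t1) _.
have t1' : 0 <= 1 - t by lra.
have := ler_wpM2l t0 ha; have := ler_wpM2l t1' hb; lra.
Qed.

Lemma box_bound (h : pt -> R) (p : pt) : convex_fun h -> exists U, forall x : pt,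
  `|x.1 - p.1| <= 2 -> `|x.2 - p.2| <= 2 -> h x <= U.
Proof.
move=> hc.
set c1 := h (p.1 - 2, p.2 - 2); set c2 := h (p.1 + 2, p.2 - 2).
set c3 := h (p.1 - 2, p.2 + 2); set c4 := h (p.1 + 2, p.2 + 2).
exists (`|c1| + `|c2| + `|c3| + `|c4|) => x hx1 hx2.
set U := `|c1| + `|c2| + `|c3| + `|c4|.
have n1 := normr_ge0 c1; have n2 := normr_ge0 c2.
have n3 := normr_ge0 c3; have n4 := normr_ge0 c4.
have l1 := ler_norm c1; have l2 := ler_norm c2.
have l3 := ler_norm c3; have l4 := ler_norm c4.
move: hx1 hx2; rewrite !ler_norml => /andP[a1 a2] /andP[b1 b2].
set t := (p.1 + 2 - x.1) / 4.
have t0 : 0 <= t by rewrite /t divr_ge0 //; lra.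
have t1 : t <= 1 by rewrite /t ler_pdivrMr //; lra.
have ex1 : x.1 = t * (p.1 - 2) + (1 - t) * (p.1 + 2) by rewrite /t; field.
have hlo : h (x.1, p.2 - 2) <= U.
  have -> : (x.1, p.2 - 2) = (t * (p.1 - 2, p.2 - 2).1 + (1 - t) * (p.1 + 2, p.2 - 2).1,
                             t * (p.1 - 2, p.2 - 2).2 + (1 - t) * (p.1 + 2, p.2 - 2).2).
    by rewrite /= -ex1; congr pair; ring.
  by apply: conv_comb => //; [apply: (le_trans l1) | apply: (le_trans l2)]; rewrite /U; lra.
have hhi : h (x.1, p.2 + 2) <= U.
  have -> : (x.1, p.2 + 2) = (t * (p.1 - 2, p.2 + 2).1 + (1 - t) * (p.1 + 2, p.2 + 2).1,
                             t * (p.1 - 2, p.2 + 2).2 + (1 - t) * (p.1 + 2, p.2 + 2).2).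
    by rewrite /= -ex1; congr pair; ring.
  by apply: conv_comb => //; [apply: (le_trans l3) | apply: (le_trans l4)]; rewrite /U; lra.
set s := (p.2 + 2 - x.2) / 4.
have s0 : 0 <= s by rewrite /s divr_ge0 //; lra.
have s1 : s <= 1 by rewrite /s ler_pdivrMr //; lra.
have ex2 : x.2 = s * (p.2 - 2) + (1 - s) * (p.2 + 2) by rewrite /s; field.
have -> : x = (s * (x.1, p.2 - 2).1 + (1 - s) * (x.1, p.2 + 2).1,
               s * (x.1, p.2 - 2).2 + (1 - s) * (x.1, p.2 + 2).2).
  rewrite /= -ex2. have -> : s * x.1 + (1 - s) * x.1 = x.1 by ring. by rewrite -surjective_pairing.
exact: conv_comb.
Qed.

Lemma subgrad_bound (h : pt -> R) (p : pt) : convex_fun h -> exists K, forall (z c : pt),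
  `|z.1 - p.1| <= 1 -> `|z.2 - p.2| <= 1 ->
  (forall w : pt, dot c w <= h (z.1 + w.1, z.2 + w.2) - h z) ->
  `|c.1| <= K /\ `|c.2| <= K.
Proof.
move=> hc; have [U HU] := box_bound p hc.
exists (2 * U - 2 * h p) => z c hz1 hz2 Hc.
move: (hz1) (hz2); rewrite !ler_norml => /andP[a1 a2] /andP[b1 b2].
have hlow : 2 * h p - U <= h z.
  have := hc z (2 * p.1 - z.1, 2 * p.2 - z.2) (1/2).
  have -> : 1 / 2 * z.1 + (1 - 1 / 2) * (2 * p.1 - z.1) = p.1 by field.
  have -> : 1 / 2 * z.2 + (1 - 1 / 2) * (2 * p.2 - z.2) = p.2 by field.
  rewrite -surjective_pairing => /(_ _ _).
  move=> H; have {}H := H ltac:(lra) ltac:(lra).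
  have : h (2 * p.1 - z.1, 2 * p.2 - z.2) <= U.
    by apply: HU; rewrite /= ler_norml; apply/andP; split; lra.
  lra.
have B : forall w : pt, `|w.1| <= 1 -> `|w.2| <= 1 -> dot c w <= 2 * U - 2 * h p.
  move=> w; rewrite !ler_norml => /andP[w1 w2] /andP[w3 w4].
  have := Hc w; have : h (z.1 + w.1, z.2 + w.2) <= U.
    by apply: HU; rewrite /= ler_norml; apply/andP; split; lra.
  lra.
have e1 := B (1, 0); have e2 := B (-1, 0); have e3 := B (0, 1); have e4 := B (0, -1).
rewrite /dot /= ?normr0 ?normrN ?normr1 ?ler01 ?lexx in e1 e2 e3 e4.
have {}e1 := e1 isT isT; have {}e2 := e2 isT isT.
have {}e3 := e3 isT isT; have {}e4 := e4 isT isT.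
split; apply/andP; split; lra.
Qed.


Lemma g_arith (A dc D G : R) : A - (D - G) / 2 <= G - dc -> D = dc + A -> G < D -> False.
Proof. move=> *; lra. Qed.

Lemma g_sub (M : set pt) (g h : pt -> R) (z u c q : pt) :
  M !=set0 -> M z -> Tan M z `&` (@S1 R) = [set u] -> convex_fun g ->
  (forall x, distA M x = g x - h x) ->
  (forall w : pt, dot c w <= h (z.1 + w.1, z.2 + w.2) - h z) ->
  nsq q <= 1 -> dot q u <= 0 ->
  forall x : pt, dot (c.1 + q.1, c.2 + q.2) (x.1 - z.1, x.2 - z.2) <= g x - g z.
Proof.
move=> M0 Mz TU gc dgh Hc hq qu x.
set w : pt := (x.1 - z.1, x.2 - z.2).
rewrite leNgt; apply/negP => Hlt.
set D := dot (c.1 + q.1, c.2 + q.2) w in Hlt.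
set eps := (D - (g x - g z)) / 2.
have e0 : 0 < eps by rewrite /eps divr_gt0 // subr_gt0.
have [t [t0 [t1 Ht]]] := tan_lower w M0 Mz TU hq qu e0.
have gcv := gc x z t (ltW t0) t1.
have E : (t * x.1 + (1 - t) * z.1, t * x.2 + (1 - t) * z.2) =
          (z.1 + t * w.1, z.2 + t * w.2).
  by rewrite /w /=; congr pair; ring.
rewrite E in gcv; clear E.
have hcv := Hc (t * w.1, t * w.2); rewrite /= in hcv.
have dz := dist0 Mz; rewrite dgh in dz.
rewrite dgh in Ht.
have eD : D = dot c w + dot q w by rewrite /D /dot /=; ring.
have ec : dot c (t * w.1, t * w.2) = t * dot c w by rewrite /dot /=; ring.
rewrite ec in hcv.
move: Ht gcv hcv dz eD; rewrite /eps.
move=> Ht gcv hcv dz eD.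
have : t * (dot q w - (D - (g x - g z)) / 2) <= t * (g x - g z) - t * dot c w by lra.
rewrite -mulrBr ler_pM2l // => H2.
exact: (g_arith H2 eD Hlt).
Qed.


Lemma sign_ex (w : R) : exists s : R, (s = 1 \/ s = -1) /\ 0 <= s * w.
Proof.
case: (lerP 0 w) => hw; first by exists 1; split; [left | rewrite mul1r].
by exists (-1); split; [right | rewrite mulN1r oppr_ge0 ltW].
Qed.

Lemma final_arith (cx1 cx2 cy1 cy2 ux1 ux2 uy1 uy2 w1 w2 s1 s2 Gx Gy : R) :
  (s1 = 1 \/ s1 = -1) -> (s2 = 1 \/ s2 = -1) -> 0 <= s1 * w1 -> 0 <= s2 * w2 ->
  (w1 != 0) || (w2 != 0) ->
  `|(cx1 - ux1 / 2) - (cy1 - uy1 / 2)| < 1 / 8 ->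
  `|(cx2 - ux2 / 2) - (cy2 - uy2 / 2)| < 1 / 8 ->
  (cx1 + (- ux1 / 2 + s1 / 8)) * w1 + (cx2 + (- ux2 / 2 + s2 / 8)) * w2 <= Gy - Gx ->
  (cy1 + (- uy1 / 2 - s1 / 8)) * (- w1) + (cy2 + (- uy2 / 2 - s2 / 8)) * (- w2) <= Gx - Gy ->
  False.
Proof.
move=> hs1 hs2 p1 p2 nz.
set d1 := (cx1 - ux1 / 2) - (cy1 - uy1 / 2).
set d2 := (cx2 - ux2 / 2) - (cy2 - uy2 / 2).
rewrite !ltr_norml => /andP[a1 a2] /andP[b1 b2] H1 H2.
have E : d1 * w1 + d2 * w2 + (s1 * w1 + s2 * w2) / 4 <= 0.
  rewrite /d1 /d2; lra.
have s1n : s1 != 0 by case: hs1 => ->; rewrite ?oppr_eq0 oner_eq0.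
have s2n : s2 != 0 by case: hs2 => ->; rewrite ?oppr_eq0 oner_eq0.
have S0 : 0 < s1 * w1 + s2 * w2.
  case/orP: nz => nz.
  - have : 0 < s1 * w1 by rewrite lt_def mulf_neq0.
    lra.
  - have : 0 < s2 * w2 by rewrite lt_def mulf_neq0.
    lra.
have k1 : - (s1 * w1) / 8 <= d1 * w1.
  by case: hs1 => -> in p1 *; nra.
have k2 : - (s2 * w2) / 8 <= d2 * w2.
  by case: hs2 => -> in p2 *; nra.
lra.
Qed.


Lemma final_arith2 (cx1 cx2 cy1 cy2 ux1 ux2 uy1 uy2 x1 x2 y1 y2 s1 s2 Gx Gy : R) :
  (s1 = 1 \/ s1 = -1) -> (s2 = 1 \/ s2 = -1) -> 0 <= s1 * (y1 - x1) -> 0 <= s2 * (y2 - x2) ->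
  (y1 - x1 != 0) || (y2 - x2 != 0) ->
  `|(cx1 - ux1 / 2) - (cy1 - uy1 / 2)| < 1 / 8 ->
  `|(cx2 - ux2 / 2) - (cy2 - uy2 / 2)| < 1 / 8 ->
  (cx1 + (- ux1 / 2 + s1 / 8)) * (y1 - x1) + (cx2 + (- ux2 / 2 + s2 / 8)) * (y2 - x2) <= Gy - Gx ->
  (cy1 + (- uy1 / 2 + (- s1) / 8)) * (x1 - y1) + (cy2 + (- uy2 / 2 + (- s2) / 8)) * (x2 - y2)
     <= Gx - Gy -> False.
Proof.
move=> hs1 hs2 p1 p2 nz d1 d2 H1 H2.
apply: (final_arith hs1 hs2 p1 p2 nz d1 d2 H1).
move: H2; rewrite (_ : x1 - y1 = - (y1 - x1)); last by ring.
rewrite (_ : x2 - y2 = - (y2 - x2)); last by ring.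
move=> H2; lra.
Qed.

Lemma q_ok (u1 u2 s1 s2 : R) : u1 ^+ 2 + u2 ^+ 2 = 1 -> (s1 = 1 \/ s1 = -1) -> (s2 = 1 \/ s2 = -1) ->
  (- u1 / 2 + s1 / 8) ^+ 2 + (- u2 / 2 + s2 / 8) ^+ 2 <= 1 /\
  (- u1 / 2 + s1 / 8) * u1 + (- u2 / 2 + s2 / 8) * u2 <= 0.
Proof.
move=> hu hs1 hs2.
have b1 : u1 ^+ 2 <= 1 by have := sqr_ge0 u2; lra.
have b2 : u2 ^+ 2 <= 1 by have := sqr_ge0 u1; lra.
have c1 : -1 <= u1 <= 1 by rewrite -ler_norml; have := normr_ge0 u1; have := real_normK (num_real u1); nra.
have c2 : -1 <= u2 <= 1 by rewrite -ler_norml; have := normr_ge0 u2; have := real_normK (num_real u2); nra.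
move/andP: c1 => [c1 c1']; move/andP: c2 => [c2 c2'].
by case: hs1 => ->; case: hs2 => ->; split; nra.
Qed.

Lemma S1_of (M : set pt) (z u : pt) : Tan M z `&` (@S1 R) = [set u] -> nsq u = 1.
Proof. by move=> TU; have : [set u] u by []; rewrite -TU => -[_]. Qed.

Lemma two_pts (M : set pt) (g h : pt -> R) (x y ux uy cx cy : pt) :
  M !=set0 -> convex_fun g -> (forall X, distA M X = g X - h X) ->
  M x -> Tan M x `&` (@S1 R) = [set ux] ->
  (forall w : pt, dot cx w <= h (x.1 + w.1, x.2 + w.2) - h x) ->
  M y -> Tan M y `&` (@S1 R) = [set uy] ->
  (forall w : pt, dot cy w <= h (y.1 + w.1, y.2 + w.2) - h y) ->
  x <> y ->
  `|(cx.1 - ux.1 / 2) - (cy.1 - uy.1 / 2)| < 1 / 8 ->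
  `|(cx.2 - ux.2 / 2) - (cy.2 - uy.2 / 2)| < 1 / 8 -> False.
Proof.
move=> M0 gc dgh Mx TUx Hcx My TUy Hcy xy d1 d2.
have nux := S1_of TUx; have nuy := S1_of TUy.
have [s1 [hs1 p1]] := sign_ex (y.1 - x.1).
have [s2 [hs2 p2]] := sign_ex (y.2 - x.2).
have hs1' : -s1 = 1 \/ -s1 = -1 by case: hs1 => ->; [right | left; rewrite opprK].
have hs2' : -s2 = 1 \/ -s2 = -1 by case: hs2 => ->; [right | left; rewrite opprK].
have [qx1 qx2] := q_ok nux hs1 hs2.
have [qy1 qy2] := q_ok nuy hs1' hs2'.
have Hx := g_sub (q := (- ux.1 / 2 + s1 / 8, - ux.2 / 2 + s2 / 8)) M0 Mx TUx gc dgh Hcx qx1 qx2 y.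
have Hy := g_sub (q := (- uy.1 / 2 + (- s1) / 8, - uy.2 / 2 + (- s2) / 8)) M0 My TUy gc dgh Hcy qy1 qy2 x.
rewrite /dot /= in Hx Hy.
have nz : (y.1 - x.1 != 0) || (y.2 - x.2 != 0).
  case: (eqVneq (y.1 - x.1) 0) => [e1|n1] //.
  case: (eqVneq (y.2 - x.2) 0) => [e2|n2]; last by rewrite orbT.
  exfalso; apply: xy.
  have f1 : x.1 = y.1 by apply/eqP; rewrite eq_sym -subr_eq0 e1.
  have f2 : x.2 = y.2 by apply/eqP; rewrite eq_sym -subr_eq0 e2.
  by rewrite [x]surjective_pairing [y]surjective_pairing f1 f2.
exact: (final_arith2 hs1 hs2 p1 p2 nz d1 d2 Hx Hy).
Qed.

End Aux.

Lemma nb (R : realType) (p : pt R) (r : R) : 0 < r ->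
  nbhs p [set x : pt R | `|x.1 - p.1| < r /\ `|x.2 - p.2| < r].
Proof.
move=> r0.
exists ([set y | `|y - p.1| < r], [set y | `|y - p.2| < r]) => /=.
  split.
  - apply/nbhs_ballP; exists r => //= y; rewrite /ball /= distrC. done.
  - apply/nbhs_ballP; exists r => //= y; rewrite /ball /= distrC. done.
by move=> [a b] [/= h1 h2].
Qed.

Lemma rho_pos (R : realType) (x p : pt R) : x <> p ->
  0 < Num.max `|x.1 - p.1| `|x.2 - p.2|.
Proof.
move=> xp; rewrite lt_max; apply/negPn/negP; rewrite negb_or -!leNgt => /andP[h1 h2].
apply: xp.
have f1 : x.1 = p.1 by apply/eqP; rewrite -subr_eq0 -normr_le0.
have f2 : x.2 = p.2 by apply/eqP; rewrite -subr_eq0 -normr_le0.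
by rewrite [x]surjective_pairing [p]surjective_pairing f1 f2.
Qed.

Theorem proposition5p9 (R : realType) (M : set (pt R)) :
  D2 M -> discrete_set (E_set M).
Proof.
case=> [->|[M0 [Mcl [g [h [gc [hc dgh]]]]]]].
  move=> p; exists setT; split; first exact: filterT.
  by move=> x y _ _ [].
move=> p; apply: contrapT => Hno.
pose rho (x : pt R) := Num.max `|x.1 - p.1| `|x.2 - p.2|.
have HF : forall r : R, exists x : pt R, 0 < r -> E_set M x /\ 0 < rho x /\ rho x < r.
  move=> r; case: (boolP (0 < r)) => r0; last by exists p.
  apply: contrapT => Hn; apply: Hno.
  exists [set x | `|x.1 - p.1| < r /\ `|x.2 - p.2| < r]; split; first exact: nb.
  move=> x y [hx1 hx2] [hy1 hy2] Ex Ey.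
  apply: contrapT => xy.
  case: (eqVneq x p) => [xp|/eqP xp].
  - apply: Hn; exists y => _; split => //; split.
    + by apply: rho_pos => yp; apply: xy; rewrite xp yp.
    + by rewrite /rho gt_max hy1 hy2.
  - apply: Hn; exists x => _; split => //; split.
    + exact: rho_pos.
    + by rewrite /rho gt_max hx1 hx2.
have [F HFp] := choice HF.
pose rr n := iter n (fun r => rho (F r)) 1.
have rrS : forall n, rr n.+1 = rho (F (rr n)) by [].
have P : forall n, 0 < rr n.
  elim=> [|n IH]; first exact: ltr01.
  by rewrite rrS; have [_ [? _]] := HFp _ IH.
pose z n := F (rr n).
have Q : forall n, E_set M (z n) /\ 0 < rho (z n) /\ rho (z n) < rr n.
  by move=> n; exact: HFp _ (P n).
have rr_le : forall n k, rr (n + k)%N <= rr n.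
  move=> n; elim=> [|k IH]; first by rewrite addn0.
  rewrite addnS rrS; apply: le_trans IH; apply: ltW.
  by have [_ [_ ]] := Q (n + k)%N.
have zinj : forall n m, (n < m)%N -> z n <> z m.
  move=> n m nm e.
  have h1 : rho (z m) < rr m by case: (Q m) => _ [].
  have h2 : rr m <= rr n.+1 by rewrite -(subnKC nm); exact: rr_le.
  have : rho (z m) < rho (z n) by rewrite -rrS; exact: lt_le_trans h1 h2.
  by rewrite e ltxx.
have zb : forall n, `|(z n).1 - p.1| <= 1 /\ `|(z n).2 - p.2| <= 1.
  move=> n; have [_ [_ h1]] := Q n.
  have h2 : rr n <= 1 by have := rr_le 0%N n; rewrite add0n.
  have := lt_le_trans h1 h2; rewrite /rho gt_max => /andP[a b].
  by split; apply: ltW.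
have [U HU] := choice (fun n => (Q n).1.2).
have [C HC] := choice (fun n => subgrad hc (z n)).
have [K HK] := subgrad_bound p hc.
have Ub : forall n, `|(U n).1| <= 1 /\ `|(U n).2| <= 1.
  move=> n; have := S1_of (HU n); rewrite /nsq => e.
  have a1 := real_normK (num_real (U n).1); have a2 := real_normK (num_real (U n).2).
  have b1 := normr_ge0 (U n).1; have b2 := normr_ge0 (U n).2.
  have c1 := sqr_ge0 (U n).1; have c2 := sqr_ge0 (U n).2.
  by split; nra.
have Cb : forall n, `|(C n).1| <= K /\ `|(C n).2| <= K.
  by move=> n; have [zb1 zb2] := zb n; exact: HK (zb1) (zb2) (HC n).
pose e1 n := (C n).1 - (U n).1 / 2.
pose e2 n := (C n).2 - (U n).2 / 2.
have eb : forall n, `|e1 n| <= K + 1 /\ `|e2 n| <= K + 1.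
  move=> n; have [u1 u2] := Ub n; have [c1 c2] := Cb n.
  split.
  - apply: le_trans (ler_normB _ _) _; rewrite normrM normfV normr_nat.
    have := normr_ge0 (U n).1; lra.
  - apply: le_trans (ler_normB _ _) _; rewrite normrM normfV normr_nat.
    have := normr_ge0 (U n).2; lra.
have B1 : bounded_fun e1.
  by apply: (@bfun _ _ (K + 1)) => n; case: (eb n).
have [f1 f1i f1c] := bolzano_weierstrass B1.
have B2 : bounded_fun (fun n => e2 (f1 n)).
  by apply: (@bfun _ _ (K + 1)) => n; case: (eb (f1 n)).
have [f2 f2i f2c] := bolzano_weierstrass B2.
pose sg := f1 \o f2.
have sgi : increasing_seq sg by exact: comp_incr.
have C1 := subseq_cvg f2i f1c.
have C2 := f2c.
have e0 : (0 : R) < 1 / 16 by [].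
have [N1 _ HN1] := (cvgrPdist_lt _ _).1 C1 _ e0.
have [N2 _ HN2] := (cvgrPdist_lt _ _).1 C2 _ e0.
set N := maxn N1 N2.
have a1 := HN1 N (leq_maxl _ _); have a2 := HN1 N.+1 (leq_trans (leq_maxl _ _) (leqnSn _)).
have b1 := HN2 N (leq_maxr _ _); have b2 := HN2 N.+1 (leq_trans (leq_maxr _ _) (leqnSn _)).
rewrite /= in a1 a2 b1 b2.
have ne : z (sg N) <> z (sg N.+1).
  by apply: zinj; exact: (increasing_seqP sg).2 sgi N.
have d1 : `|e1 (f1 (f2 N)) - e1 (f1 (f2 N.+1))| < 1 / 8.
  move: a1 a2; rewrite !ltr_norml => /andP[a1 a1'] /andP[a2 a2'].
  apply/andP; split; lra.
have d2 : `|e2 (f1 (f2 N)) - e2 (f1 (f2 N.+1))| < 1 / 8.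
  move: b1 b2; rewrite !ltr_norml => /andP[b1 b1'] /andP[b2 b2'].
  apply/andP; split; lra.
have [[Mx _] _] := Q (sg N).
have [[My _] _] := Q (sg N.+1).
exact: (two_pts M0 gc dgh Mx (HU (sg N)) (HC (sg N)) My (HU (sg N.+1)) (HC (sg N.+1)) ne d1 d2).
Qed.
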